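(* $\mathtt{Trellis}\subseteq\mathtt{incl}$-$\mathtt{ESO}$-$\mathtt{HORN}$.
   Context: Fix a finite alphabet $\Sigma$. A nonempty word $w=w_1\cdots w_n$ is represented by the structure $\langle w\rangle=([1,n];(Q_s)_{s\in\Sigma},\mathtt{min},\mathtt{max},\mathtt{suc},\mathtt{pred})$ with $Q_s(i)\iff w_i=s$, $\mathtt{min}(i)\iff i=1$, $\mathtt{max}(i)\iff i=n$, $\mathtt{suc}(i)=\min(i+1,n)$, $\mathtt{pred}(i)=\max(i-1,1)$. For an integer $a$, $x+a$ denotes $\mathtt{suc}^a(x)$ if $a\ge0$ and $\mathtt{pred}^{-a}(x)$ if $a<0$; $y-b=\mathtt{pred}^b(y)$. An inclusion Horn formula is $\Phi=\exists\mathbf{R}\forall x\forall y\,\psi(x,y)$, $\mathbf{R}$ a finite set of binary relation symbols, $\psi$ a conjunction of Horn clauses over $\{(Q_s)_{s\in\Sigma},\mathtt{min},\mathtt{max},\mathtt{suc},\mathtt{pred}\}\cup\mathbf{R}\cup\{=,\le,<\}$, each of the form $x\le y\wedge\delta_1\wedge\cdots\wedge\delta_r\to\delta_0$ with $\delta_0$ an atom $R(x,y)$ ($R\in\mathbf{R}$) or $\bot$, each $\delta_i$ one of: $U(x+a)$, $\neg U(x+a)$, $U(y+a)$, $\neg U(y+a)$ for $U\in\{(Q_s)_{s\in\Sigma},\mathtt{min},\mathtt{max}\}$, $a\in\mathbb Z$; $x=y$ or $x<y$; $S(x+a,y-b)\wedge x+a\le y-b$ with $S\in\mathbf{R}$,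 $a,b\ge0$. $\mathtt{incl}$-$\mathtt{ESO}$-$\mathtt{HORN}$ is the class of languages $\{w\in\Sigma^+:\langle w\rangle\models\Phi\}$. A one-way cellular automaton (OCA) is $(Q,\Sigma,Q_{accept},\{-1,0\},\delta)$ with finite $Q\supseteq\Sigma$, $Q_{accept}\subseteq Q$, $\delta:Q^2\to Q$; on input $w=w_1\cdots w_n$ it uses cells $1,\dots,n$ (cells outside permanently in a state $\sharp$), with $\langle c,1\rangle=w_c$ and $\langle c,t\rangle=\delta(\langle c-1,t-1\rangle,\langle c,t-1\rangle)$ for $t>1$. $\mathtt{Trellis}$ is the class of languages $L\subseteq\Sigma^+$ such that some OCA satisfies $w\in L\iff\langle n,n\rangle\in Q_{accept}$ for all $w$ of length $n$ (equivalently, languages accepted by trellis automata). *)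

(* Defs.v *)
From Stdlib Require List.
From mathcomp Require Import all_boot all_algebra.
Set Implicit Arguments. Unset Strict Implicit. Unset Printing Implicit Defensive.

Section InclHorn.
Variable Sigma : finType.

Definition sucp (n i : nat) : nat := minn i.+1 n.
Definition predp (i : nat) : nat := maxn i.-1 1.
Definition shift (n x : nat) (a : int) : nat :=
  match a with
  | Posz k => iter k (sucp n) x
  | Negz k => iter k.+1 predp x
  end.
Definition back (y b : nat) : nat := iter b predp y.

Definition allP (T : Type) (P : T -> Prop) (s : seq T) : Prop :=
  forall d, List.In d s -> P d.

Inductive upred := UQ of Sigma | UMin | UMax.
Inductive var := VarX | VarY.
Inductive atom (nR : nat) :=
  | AU of var & int & upred & bool   (* U(v+a) if true, ~U(v+a) if false *)
  | AEq
  | ALt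
  | AS of 'I_nR & nat & nat.          (* S(x+a, y-b) /\ x+a <= y-b, a,b >= 0 *)
(* clause: x <= y /\ body -> head, head = Some R for R(x,y), None for bottom *)
Record clause (nR : nat) := Clause { body : seq (atom nR); head : option 'I_nR }.
(* Phi = exists R_0..R_{nR-1} forall x forall y, conjunction of clauses *)
Record inclHorn := InclHorn { nrel : nat; clauses : seq (clause nrel) }.

Definition upred_holds (w : seq Sigma) (U : upred) (i : nat) : Prop :=
  match U with
  | UQ s => onth w i.-1 = Some s
  | UMin => i = 1
  | UMax => i = size w
  end.

Definition var_val (v : var) (x y : nat) : nat := if v is VarX then x else y.

Definition atom_holds nR (w : seq Sigma) (I : 'I_nR -> nat -> nat -> Prop)
    (x y : nat) (d : atom nR) : Prop :=
  match d with
  | AU v a U b =>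
      let p := upred_holds w U (shift (size w) (var_val v x y) a) in
      if b then p else ~ p
  | AEq => x = y
  | ALt => x < y
  | AS R a b =>
      I R (shift (size w) x (Posz a)) (back y b) /\
      shift (size w) x (Posz a) <= back y b
  end.

Definition head_holds nR (I : 'I_nR -> nat -> nat -> Prop) (x y : nat)
    (h : option 'I_nR) : Prop :=
  match h with Some R => I R x y | None => False end.

Definition clause_holds nR (w : seq Sigma) (I : 'I_nR -> nat -> nat -> Prop)
    (x y : nat) (c : clause nR) : Prop :=
  x <= y -> allP (atom_holds w I x y) (body c) -> head_holds I x y (head c).

Definition models (Phi : inclHorn) (w : seq Sigma) : Prop :=
  exists I : 'I_(nrel Phi) -> nat -> nat -> Prop,
    forall x y, 1 <= x <= size w -> 1 <= y <= size w ->
      allP (clause_holds w I x y) (clauses Phi).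

Definition incl_ESO_HORN (L : seq Sigma -> Prop) : Prop :=
  exists Phi : inclHorn, forall w, L w <-> (0 < size w /\ models Phi w).

Record OCA := MkOCA {
  Q : finType;
  inj : Sigma -> Q;          (* Q contains Sigma *)
  inj_inj : injective inj;
  acc : pred Q;
  sharp : Q;
  delta : Q -> Q -> Q }.

(* conf A w t c = <c, t+1>; cell 0 is permanently sharp *)
Fixpoint conf (A : OCA) (w : seq Sigma) (t c : nat) : Q A :=
  match t with
  | 0 => if c is 0 then sharp A
         else match onth w c.-1 with Some s => @inj A s | None => sharp A end
  | t'.+1 => if c is 0 then sharp A
             else @delta A (@conf A w t' c.-1) (@conf A w t' c)
  end.

Definition oca_accepts (A : OCA) (w : seq Sigma) : bool :=
  @acc A (conf A w (size w).-1 (size w)).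

Definition Trellis (L : seq Sigma -> Prop) : Prop :=
  (forall w, L w -> 0 < size w) /\
  exists A : OCA, forall w, 0 < size w -> (L w <-> oca_accepts A w).

End InclHorn.

(* Main.v *)
Require Import Defs.
From mathcomp Require Import all_boot all_algebra.
From Stdlib Require List.
From mathcomp Require Import zify.
From Stdlib Require Import Lia.

Lemma In_enum (T : finType) (x : T) : List.In x (enum T).
Proof.
have : x \in enum T by rewrite mem_enum.
elim: (enum T) => //= a s IH; rewrite in_cons => /orP [/eqP->|/IH]; by [left|right].
Qed.

Section Proof.
Variable Sigma : finType.
Variable A : OCA Sigma.

Local Notation N := #|Q A|.
Definition rk (q : Q A) : 'I_N := enum_rank q.

Definition base_cl (s : Sigma) : clause Sigma N :=
  Clause [:: AEq Sigma N; AU N VarX 0%R (UQ s) true] (Some (rk (inj A s))).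
Definition step_cl (pr : Q A * Q A) : clause Sigma N :=
  Clause [:: ALt Sigma N; AS Sigma (rk pr.1) 0 1; AS Sigma (rk pr.2) 1 0]
    (Some (rk (@delta _ A pr.1 pr.2))).
Definition rej_cl (q : Q A) : clause Sigma N :=
  Clause [:: AU N VarX 0%R (UMin Sigma) true; AU N VarY 0%R (UMax Sigma) true; AS Sigma (rk q) 0 0]
    None.

Definition cls : seq (clause Sigma N) :=
  List.map base_cl (enum Sigma) ++
  List.map step_cl (List.list_prod (enum (Q A)) (enum (Q A))) ++
  List.map rej_cl (List.filter (fun q => ~~ @acc _ A q) (enum (Q A))).

Definition Phi : inclHorn Sigma := InclHorn cls.

Lemma conf_step w x y : 0 < x < y ->
  conf A w (y - x) y = @delta _ A (conf A w (y.-1 - x) y.-1) (conf A w (y - x.+1) y).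
Proof.
case: y => [|y] /andP [x0 xy] //.
have -> : y.+1 - x = (y - x).+1 by rewrite subSn.
by rewrite /= subSS.
Qed.

Lemma conf_base w x s : 0 < x -> onth w x.-1 = Some s -> conf A w 0 x = inj A s.
Proof. by case: x => // x _ /= ->. Qed.

Lemma models_acc w : 0 < size w -> models Phi w -> oca_accepts A w.
Proof.
move=> n0 [I HI].
set n := size w in n0 HI *.
have key : forall k x y, 1 <= x -> y <= n -> y - x = k -> x <= y ->
    I (rk (conf A w k y)) x y.
  elim=> [|k IH] x y x1 yn hk xy.
  - have exy : x = y by apply/eqP; rewrite eqn_leq xy -subn_eq0 hk.
    subst y.
    have : x.-1 < n by rewrite prednK.
    case E: (onth w x.-1) => [s|]; last first.
      by have := onthTE w x.-1; rewrite E => <-.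
    move=> _.
    have xr : 0 < x <= n by rewrite x1 yn.
    have Hc := HI x x xr xr (base_cl s).
    have /Hc {}Hc : List.In (base_cl s) (clauses Phi).
      by apply List.in_or_app; left; apply List.in_map, In_enum.
    rewrite /clause_holds /= in Hc.
    rewrite (@conf_base w _ _ x1 E).
    apply: Hc => // d [<-|[<-|[]]] //=.
  - have xy' : x < y by rewrite -subn_gt0 hk.
    have y1 : 1 <= y by apply: leq_trans x1 (ltnW xy').
    have xr : 0 < x <= n by rewrite x1 (leq_trans (ltnW xy') yn).
    have yr : 0 < y <= n by rewrite y1 yn.
    have Hc := HI x y xr yr (step_cl (conf A w k y.-1, conf A w k y)).
    have /Hc {}Hc : List.In (step_cl (conf A w k y.-1, conf A w k y)) (clauses Phi).
      rewrite /cls; apply List.in_or_app; right; apply List.in_or_app; left.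
      apply List.in_map, List.in_prod; apply In_enum.
    rewrite /clause_holds /= in Hc.
    have e1 : y.-1 - x = k by rewrite -subn1 subnAC subn1 hk.
    have e2 : y - x.+1 = k by rewrite subnS hk.
    have xy2 : 0 < x < y by rewrite x1 xy'.
    have cs := @conf_step w x y xy2.
    rewrite hk e1 e2 in cs; rewrite cs.
    have py : predp y = y.-1 by rewrite /predp; lia.
    have sx : sucp n x = x.+1 by rewrite /sucp; lia.
    apply: Hc => //.
    + move=> d [<-|[<-|[<-|[]]]] //=; rewrite ?py ?sx; split.
      * apply: IH => //; lia.
      * lia.
      * apply: IH => //; lia.
      * lia.
rewrite /oca_accepts; apply/negPn/negP => nacc.
have n1 : 1 <= n <= n by rewrite n0 leqnn.
have n1' : 0 < 1 <= n by [].
have Hc := HI 1 n n1' n1 (rej_cl (conf A w n.-1 n)).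
have /Hc {}Hc : List.In (rej_cl (conf A w n.-1 n)) (clauses Phi).
  rewrite /cls; apply List.in_or_app; right; apply List.in_or_app; right.
  apply List.in_map, List.filter_In; split; [apply In_enum | by rewrite nacc].
rewrite /clause_holds /= in Hc.
apply: Hc => //.
- move=> d [<-|[<-|[<-|[]]]] //=; split => //.
  by apply: key => //; rewrite subn1.
Qed.

Lemma acc_models w : 0 < size w -> oca_accepts A w -> models Phi w.
Proof.
move=> n0 Hacc.
exists (fun (i : 'I_N) x y => conf A w (y - x) y = enum_val i).
move=> x y /andP [x1 xn] /andP [y1 yn] c.
move=> Hin; have {Hin} := List.in_app_or _ _ _ Hin.
case=> [|Hin]; last have {Hin} := List.in_app_or _ _ _ Hin.
- move=> /List.in_map_iff [s [<- _]]; rewrite /clause_holds /= => xy H.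
  have /= exy := H _ (or_introl erefl); subst y.
  have /= Hs := H _ (or_intror (or_introl erefl)).
  by rewrite subnn (@conf_base w _ _ x1 Hs) enum_rankK.
case.
- move=> /List.in_map_iff [[p r] [<- _]]; rewrite /clause_holds /= => xy H.
  have /= xlt := H _ (or_introl erefl).
  have /= [h1 _] := H _ (or_intror (or_introl erefl)).
  have /= [h2 _] := H _ (or_intror (or_intror (or_introl erefl))).
  have py : predp y = y.-1 by rewrite /predp; lia.
  have sx : sucp (size w) x = x.+1 by rewrite /sucp; apply/minn_idPl; apply: leq_trans xlt yn.
  rewrite py sx /rk !enum_rankK in h1 h2 *.
  by rewrite conf_step ?x1 // h1 h2.
- move=> /List.in_map_iff [q [<- /List.filter_In [_ nq]]]; rewrite /clause_holds /= => xy H.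
  have /= ex := H _ (or_introl erefl).
  have /= ey := H _ (or_intror (or_introl erefl)).
  have /= [h _] := H _ (or_intror (or_intror (or_introl erefl))).
  move: h; rewrite ex ey /rk enum_rankK subn1 => h.
  by move: Hacc nq; rewrite /oca_accepts h => ->.
Qed.

End Proof.

Theorem lemma9 (Sigma : finType) (L : seq Sigma -> Prop) :
  Trellis L -> incl_ESO_HORN L.
Proof.
move=> [Lpos [A HA]].
exists (@Phi _ A) => w; split.
- move=> Lw; have n0 := Lpos _ Lw; split => //.
  by apply: acc_models => //; apply/HA.
- by move=> [n0 M]; apply/HA => //; apply: models_acc.
Qed.
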